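(* For $n = 2^i$ with $i \ge 1$, there exists a solution to the $(n-2)$-out-of-$n$ picture-hanging puzzle on the nails $\{1,\dots,n\}$ whose length is exactly \[ 6n\log_2(n/2) = 6n(\log_2 n - 1). \]
   Context: Words are elements of the free group $F(V)$ on $V=\{1,\dots,n\}$, written additively ($+$ group operation, $-$ inverse, $0$ identity, the empty word). Length is the number of letters of the freely reduced word. For $S \subseteq V$, $w|_S$ is the image of $w$ under the homomorphism killing the generators in $S$ (''removing the nails in $S$''). For $0 \le k \le n$, a solution to the $k$-out-of-$n$ picture-hanging puzzle is a word $w$ such that for every $S \subseteq V$: $w|_S = 0 \iff |S| \ge k$ (the picture falls exactly when at least $k$ nails are removed). For $n=2$, $k=0$ and the solution is the empty word. *)

(* Defs.v *)
From mathcomp Require Import all_boot.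
Set Implicit Arguments. Unset Strict Implicit. Unset Printing Implicit Defensive.

(* Elements of the free group F(V), V = the n nails, represented (as usual)
   by freely reduced words. Nail j+1 of the paper is 'I_n element j.
   A letter (j, false) is the generator j, (j, true) its inverse. *)
Definition letter (n : nat) := ('I_n * bool)%type.

Definition inv_letter n (x : letter n) : letter n := (x.1, ~~ x.2).

Definition freely_reduced n (w : seq (letter n)) : bool :=
  sorted (fun x y => y != inv_letter x) w.

Definition reduce n (w : seq (letter n)) : seq (letter n) :=
  foldr (fun x acc => match acc with
                      | y :: t => if y == inv_letter x then t else x :: acc
                      | [::] => [:: x]
                      end) [::] w.

(* w|_S : image under the homomorphism killing the generators in S. *)
Definition restrict n (S : {set 'I_n}) (w : seq (letter n)) : seq (letter n) :=
  reduce [seq x <- w | x.1 \notin S].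

Definition hanging_solution n (k : nat) (w : seq (letter n)) : Prop :=
  freely_reduced w /\
  forall S : {set 'I_n}, restrict S w = [::] <-> k <= #|S|.

(* Main.v *)
Require Import Defs.
From mathcomp Require Import all_boot.
From mathcomp Require Import zify.
Set Implicit Arguments. Unset Strict Implicit. Unset Printing Implicit Defensive.


Section Gen.
Variable n : nat.
Implicit Types (x y : letter n) (w u v acc r : seq (letter n)).

Definition step x acc : seq (letter n) := match acc with
  | y :: t => if y == inv_letter x then t else x :: acc
  | [::] => [:: x] end.
Definition act w acc := foldr step acc w.
Lemma reduceE w : reduce w = act w [::]. Proof. by []. Qed.
Lemma act_cons x w acc : act (x :: w) acc = step x (act w acc). Proof. by []. Qed.
Definition red w := freely_reduced w.
Definition Triv w := forall acc, red acc -> act w acc = acc.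
Definition inv_word w := rev (map (@inv_letter n) w).
Definition comm u v := u ++ v ++ inv_word u ++ inv_word v.

Lemma inv_letterK x : inv_letter (inv_letter x) = x.
Proof. by case: x => a b; rewrite /inv_letter /= negbK. Qed.

Lemma red_tail x w : red (x :: w) -> red w.
Proof. exact: path_sorted. Qed.

Lemma red_cons x y w : red (y :: w) -> y != inv_letter x -> red (x :: y :: w).
Proof. by rewrite /red /freely_reduced /= => -> ->. Qed.

Lemma step_red x acc : red acc -> red (step x acc).
Proof.
case: acc => [|y t] //= H.
case: ifP => E; first exact: red_tail H.
by apply: red_cons => //; rewrite E.
Qed.

Lemma act_red w acc : red acc -> red (act w acc).
Proof. by elim: w => //= x w IH H; apply: step_red; apply: IH. Qed.

Lemma step_cancel x acc : red acc -> step (inv_letter x) (step x acc) = acc.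
Proof.
case: acc => [|y t] /=; first by rewrite inv_letterK eqxx.
case: ifP => E H; last by rewrite /= inv_letterK eqxx.
move/eqP: E H => ->.
case: t => [|z t] //= H.
case: ifP => E2 //.
by move: H; rewrite /red /freely_reduced /= E2.
Qed.

Lemma step_cancel' x acc : red acc -> step x (step (inv_letter x) acc) = acc.
Proof. by move=> H; rewrite -{1}(inv_letterK x) step_cancel. Qed.

Lemma act_cat u v acc : act (u ++ v) acc = act u (act v acc).
Proof. exact: foldr_cat. Qed.

Lemma inv_word_cons x u : inv_word (x :: u) = inv_word u ++ [:: inv_letter x].
Proof. by rewrite /inv_word /= rev_cons cats1. Qed.

Lemma inv_wordK u : inv_word (inv_word u) = u.
Proof.
rewrite /inv_word map_rev revK -map_comp.
by elim: u => //= x u ->; rewrite inv_letterK.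
Qed.

Lemma act_inv u acc : red acc -> act (inv_word u) (act u acc) = acc.
Proof.
elim: u acc => // x u IH acc H.
rewrite inv_word_cons act_cat act_cons /= step_cancel ?IH //.
exact: act_red.
Qed.

Lemma act_invK u acc : red acc -> act u (act (inv_word u) acc) = acc.
Proof. by move=> H; rewrite -{1}(inv_wordK u) act_inv. Qed.

Lemma Triv_cat u v : Triv u -> Triv v -> Triv (u ++ v).
Proof. by move=> Hu Hv acc H; rewrite act_cat Hv // Hu. Qed.

Lemma Triv_nil : Triv [::]. Proof. by []. Qed.

Lemma Triv_inv u : Triv u -> Triv (inv_word u).
Proof. by move=> Hu acc H; rewrite -{1}(Hu acc H) act_inv. Qed.

Lemma Triv_comm u v : Triv u \/ Triv v -> Triv (comm u v).
Proof.
move=> [Hu|Hv] acc H; rewrite /comm !act_cat.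
- have R1 := act_red (inv_word v) H.
  rewrite (Triv_inv Hu) // Hu; last exact: act_red.
  exact: act_invK.
- rewrite (Triv_inv Hv) // Hv; last exact: act_red.
  exact: act_invK.
Qed.

Lemma act_reduced w : red w -> act w [::] = w.
Proof.
elim: w => // x w IH H.
rewrite act_cons IH; last exact: red_tail H.
case: w H {IH} => [|y w] //= H.
move: H; rewrite /red /freely_reduced /= => /andP [H1 _].
by rewrite (negbTE H1).
Qed.

Definition fw (p : pred 'I_n) w := [seq l <- w | p l.1].
Lemma fw_cons p x u : fw p (x :: u) = if p x.1 then x :: fw p u else fw p u.
Proof. by []. Qed.
Lemma fw_cat p u v : fw p (u ++ v) = fw p u ++ fw p v. Proof. exact: filter_cat. Qed.
Lemma fw_inv p u : fw p (inv_word u) = inv_word (fw p u).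
Proof. by rewrite /fw /inv_word filter_rev filter_map. Qed.
Lemma fw_comm p u v : fw p (comm u v) = comm (fw p u) (fw p v).
Proof. by rewrite /comm !fw_cat !fw_inv. Qed.

Lemma act_step x r acc : red r -> red acc -> act (step x r) acc = step x (act r acc).
Proof.
case: r => [|y t] //= Hr Hacc.
case: ifP => E //.
by rewrite (eqP E) step_cancel' //; exact: act_red.
Qed.

Lemma fw_step p x r acc : red r -> red acc ->
  act (fw p (step x r)) acc = act (fw p (x :: r)) acc.
Proof.
case: r => [|y t] //= Hr Hacc.
case: ifP => E //.
rewrite (eqP E) /=.
case: (p x.1) => //.
rewrite !act_cons step_cancel' //.
exact: act_red.
Qed.

Lemma act_fw p u acc : red acc -> act (fw p u) acc = act (fw p (act u [::])) acc.
Proof.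
move=> H; elim: u => // x u IH.
rewrite act_cons fw_step //; last exact: act_red.
rewrite !fw_cons; case: (p x.1); rewrite ?act_cons IH //.
Qed.

Lemma triv_fw p u : act u [::] = [::] -> Triv (fw p u).
Proof. by move=> H acc Hacc; rewrite act_fw // H. Qed.

End Gen.
Section E.
Variable n : nat.
Lemma explicit1 (x y z : 'I_n) : x != y -> x != z -> y != z ->
  act (comm [:: (x,false); (y,false); (x,true); (y,true)] [:: (z,false)]) [::] != [::].
Proof.
move=> xy xz yz.
rewrite act_reduced //.
rewrite /red /freely_reduced /comm /inv_word /= !xpair_eqE /=.
by rewrite !andbT !andbF /= (eq_sym z) (eq_sym y x) xy yz.
Qed.
Lemma explicit2 (x y z : 'I_n) : x != y -> x != z -> y != z ->
  act (comm [:: (x,false)] [:: (y,false); (z,false); (y,true); (z,true)]) [::] != [::].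
Proof.
move=> xy xz yz.
rewrite act_reduced //.
rewrite /red /freely_reduced /comm /inv_word /= !xpair_eqE /=.
by rewrite !andbT !andbF /= yz (eq_sym z x) xz (eq_sym z y) yz.
Qed.
Lemma act_triv_r (u v : seq (letter n)) : Triv v -> act (u ++ v) [::] = act u [::].
Proof. by move=> H; rewrite act_cat H. Qed.
Lemma act_triv_l (u v : seq (letter n)) : Triv u -> act (u ++ v) [::] = act v [::].
Proof. by move=> H; rewrite act_cat H //; apply: act_red. Qed.
End E.

Section Constr.
Variable n : nat.
Variable d : 'I_n.
Implicit Types (x y : letter n) (w u v acc r : seq (letter n)).

Definition nl (b : bool) (j : nat) : letter n := (insubd d j, b).
Definition P off m := map (nl false) (iota off m).
Definition Q off m := map (nl true) (iota off m).
Definition X off m := P off m ++ Q off m.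
Definition C t off := comm (X off (2 ^ t)) (P (off + 2 ^ t) (2 ^ t))
   ++ comm (P off (2 ^ t)) (X (off + 2 ^ t) (2 ^ t)).
Fixpoint W t off := if t is t1.+1 then
  (if t1 is 0 then [::] else W t1 off ++ W t1 (off + 2 ^ t1) ++ C t1 off) else [::].

Lemma WS t off : W t.+2 off = W t.+1 off ++ W t.+1 (off + 2 ^ t.+1) ++ C t.+1 off.
Proof. by []. Qed.

Lemma size_comm u v : size (comm u v) = 2 * (size u + size v).
Proof. rewrite /comm /inv_word !size_cat !size_rev !size_map; lia. Qed.

Lemma size_C t off : size (C t off) = 12 * 2 ^ t.
Proof. rewrite /C size_cat !size_comm /X !size_cat /P /Q !size_map !size_iota; lia. Qed.

Lemma size_W t off : size (W t.+1 off) = 6 * 2 ^ t.+1 * t.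
Proof.
elim: t off => [|t IH] off //.
rewrite WS size_cat size_cat size_C !IH (expnS 2 t.+1); nia.
Qed.

Lemma two_pow t : 2 ^ t.+1 = 2 ^ t + 2 ^ t.
Proof. by rewrite expnS mul2n addnn. Qed.

Section Filt.
Variable pn : pred 'I_n.
Let q := fun j => pn (insubd d j).

Lemma fw_P off m : fw pn (P off m) = map (nl false) (filter q (iota off m)).
Proof. by rewrite /fw /P filter_map. Qed.
Lemma fw_Q off m : fw pn (Q off m) = map (nl true) (filter q (iota off m)).
Proof. by rewrite /fw /Q filter_map. Qed.

Lemma triv_X1 off m : count q (iota off m) <= 1 -> Triv (fw pn (X off m)).
Proof.
rewrite /X fw_cat fw_P fw_Q -size_filter.
case: (filter q (iota off m)) => [|j [|k s]] //= _.
move=> acc H; rewrite !act_cons /=.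
exact: (step_cancel' (nl false j) H).
Qed.

Lemma fw_P0 off m : count q (iota off m) = 0 -> fw pn (P off m) = [::].
Proof. by rewrite fw_P -size_filter => /eqP; rewrite size_eq0 => /eqP ->. Qed.

Lemma fw_X0 off m : count q (iota off m) = 0 -> fw pn (X off m) = [::].
Proof. by move=> H; rewrite /X fw_cat fw_P0 // fw_Q; move: H; rewrite -size_filter => /eqP; rewrite size_eq0 => /eqP ->. Qed.

Lemma count_split t off : count q (iota off (2 ^ t.+1)) =
  count q (iota off (2 ^ t)) + count q (iota (off + 2 ^ t) (2 ^ t)).
Proof. by rewrite two_pow iotaD count_cat. Qed.

Lemma PT t off : count q (iota off (2 ^ t.+1)) <= 2 -> Triv (fw pn (W t.+1 off)).
Proof.
elim: t off => [|t IH] off; first by move=> _; exact: Triv_nil.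
rewrite count_split => H.
rewrite WS fw_cat fw_cat /C fw_cat !fw_comm.
apply: Triv_cat; first by apply: IH; lia.
apply: Triv_cat; first by apply: IH; lia.
apply: Triv_cat; apply: Triv_comm.
- case: (leqP (count q (iota off (2 ^ t.+1))) 1) => h.
    by left; apply: triv_X1.
  by right; rewrite fw_P0; [exact: Triv_nil | lia].
- case: (leqP (count q (iota (off + 2 ^ t.+1) (2 ^ t.+1))) 1) => h.
    by right; apply: triv_X1.
  by left; rewrite fw_P0; [exact: Triv_nil | lia].
Qed.

Lemma filter_iota_mem off m j : j \in filter q (iota off m) -> off <= j < off + m.
Proof. by rewrite mem_filter mem_iota => /andP []. Qed.

Lemma filter2 off m : count q (iota off m) = 2 -> exists a b,
  filter q (iota off m) = [:: a; b] /\ a != b /\ off <= a < off + m /\ off <= b < off + m.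
Proof.
rewrite -size_filter.
have U : uniq (filter q (iota off m)) by apply: filter_uniq; apply: iota_uniq.
have M := @filter_iota_mem off m.
case: (filter q (iota off m)) U M => [|a [|b [|c s]]] //= U M _.
exists a, b; split=> //.
move: U => /andP [U _]; split; first by move: U; rewrite inE.
by split; apply: M; rewrite !inE eqxx ?orbT.
Qed.

Lemma filter1 off m : count q (iota off m) = 1 -> exists c,
  filter q (iota off m) = [:: c] /\ off <= c < off + m.
Proof.
rewrite -size_filter.
have M := @filter_iota_mem off m.
case: (filter q (iota off m)) M => [|a [|b s]] //= M _.
by exists a; split=> //; apply: M; rewrite !inE eqxx.
Qed.

Lemma insubd_neq a b : a < n -> b < n -> a != b -> insubd d a != insubd d b.
Proof.
move=> ha hb hab; apply: contra hab => /eqP h.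
by have := congr1 val h; rewrite !val_insubd ha hb => ->.
Qed.

Lemma NT t off : off + 2 ^ t.+1 <= n -> count q (iota off (2 ^ t.+1)) = 3 ->
  act (fw pn (W t.+1 off)) [::] != [::].
Proof.
elim: t off => [|t IH] off Hn.
  by move=> H; have := count_size q (iota off (2 ^ 1)); rewrite H size_iota.
rewrite count_split => H.
have Hm : 2 ^ t.+2 = 2 ^ t.+1 + 2 ^ t.+1 by rewrite two_pow.
rewrite WS fw_cat fw_cat /C fw_cat !fw_comm.
set m := 2 ^ t.+1 in IH H Hm Hn *.
set cA := count q (iota off m) in H.
set cB := count q (iota (off + m) m) in H.
have tA : cA <= 2 -> Triv (fw pn (W t.+1 off)) by move=> h; apply: PT.
have tB : cB <= 2 -> Triv (fw pn (W t.+1 (off + m))) by move=> h; apply: PT.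
have : cA = 0 \/ cA = 1 \/ cA = 2 \/ cA = 3 by lia.
case=> [hA|[hA|[hA|hA]]].
- rewrite act_triv_l; last by apply: tA; lia.
  rewrite act_triv_r; first by apply: IH; lia.
  rewrite (fw_P0 hA) (fw_X0 hA).
  by apply: Triv_cat; apply: Triv_comm; left; exact: Triv_nil.
- have hB : cB = 2 by lia.
  rewrite act_triv_l; last by apply: tA; lia.
  rewrite act_triv_l; last by apply: tB; lia.
  rewrite act_triv_l; last by apply: Triv_comm; left; apply: triv_X1; lia.
  have [a [b [Eab [ab [ha hb]]]]] := filter2 hB.
  have [c [Ec hc]] := filter1 hA.
  rewrite /X fw_cat !fw_P fw_Q Eab Ec /=.
  apply: explicit2; apply: insubd_neq; lia.
- have hB : cB = 1 by lia.
  rewrite act_triv_l; last by apply: tA; lia.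
  rewrite act_triv_l; last by apply: tB; lia.
  rewrite act_triv_r; last by apply: Triv_comm; right; apply: triv_X1; lia.
  have [a [b [Eab [ab [ha hb]]]]] := filter2 hA.
  have [c [Ec hc]] := filter1 hB.
  rewrite /X fw_cat !fw_P fw_Q Eab Ec /=.
  apply: explicit1; apply: insubd_neq; lia.
- have hB : cB = 0 by lia.
  rewrite act_triv_r; first by apply: IH; lia.
  apply: Triv_cat; first by apply: tB; lia.
  rewrite (fw_P0 hB) (fw_X0 hB).
  by apply: Triv_cat; apply: Triv_comm; right; exact: Triv_nil.
Qed.

End Filt.
End Constr.

Definition neq (a b : nat) := a != b.

Lemma sc_gen (s1 s2 : seq nat) : sorted neq s1 -> sorted neq s2 ->
  (s1 != [::] -> s2 != [::] -> last 0 s1 != head 0 s2) -> sorted neq (s1 ++ s2).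
Proof.
case: s1 => [|x s1] // H1; case: s2 => [|y s2]; rewrite ?cats0 // => H2 J.
rewrite /= cat_path; rewrite /= in H1 H2; rewrite H1 /=; apply/andP; split; [exact: J | exact: H2].
Qed.

Lemma sc (s1 s2 r : seq nat) : sorted neq s1 -> sorted neq (s2 ++ r) ->
  s1 != [::] -> s2 != [::] -> last 0 s1 != head 0 s2 -> sorted neq (s1 ++ s2 ++ r).
Proof.
move=> H1 H2 n1 n2 J; apply: sc_gen => // _ _.
by case: s2 H2 n2 J.
Qed.

Lemma head_cat0 (s r : seq nat) : s != [::] -> head 0 (s ++ r) = head 0 s.
Proof. by case: s. Qed.
Lemma last_cat0 (s r : seq nat) : r != [::] -> last 0 (s ++ r) = last 0 r.
Proof. by rewrite last_cat; case: r. Qed.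

Lemma last_iotaS a k : last 0 (iota a k.+1) = a + k.
Proof. by rewrite -addn1 iotaD last_cat. Qed.
Lemma head_iotaS a k : head 0 (iota a k.+1) = a.
Proof. by []. Qed.
Lemma head_rev0 (s : seq nat) : head 0 (rev s) = last 0 s.
Proof. by case/lastP: s => [|s x] //; rewrite rev_rcons last_rcons. Qed.
Lemma last_rev0 (s : seq nat) : last 0 (rev s) = head 0 s.
Proof. by case: s => [|x s] //; rewrite rev_cons last_rcons. Qed.

Lemma sorted_iota_neq a m : sorted neq (iota a m).
Proof.
apply: (sub_sorted (e := ltn)); last exact: iota_ltn_sorted.
by move=> u v /= h; rewrite /neq neq_ltn h.
Qed.
Lemma sorted_rev_neq (s : seq nat) : sorted neq s -> sorted neq (rev s).
Proof.
move=> H; rewrite rev_sorted; apply: sub_sorted H.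
by move=> u v; rewrite /neq eq_sym.
Qed.
Lemma sorted_riota_neq a m : sorted neq (rev (iota a m)).
Proof. exact/sorted_rev_neq/sorted_iota_neq. Qed.

Lemma nonnil_iota a k : iota a k.+1 != [::]. Proof. by []. Qed.
Lemma nonnil_riota a k : rev (iota a k.+1) != [::].
Proof. by rewrite -size_eq0 size_rev size_iota. Qed.

Ltac piece := first [exact: sorted_iota_neq | exact: sorted_riota_neq
  | exact: nonnil_iota | exact: nonnil_riota
  | rewrite ?head_rev0 ?last_rev0 ?last_iotaS ?head_iotaS /neq; lia].

Lemma C_nat a k :
  let m := k.+2 in let iA := iota a m in let iB := iota (a + m) m in
  let L := ((iA ++ iA) ++ iB ++ rev (iA ++ iA) ++ rev iB) ++
           (iA ++ (iB ++ iB) ++ rev iA ++ rev (iB ++ iB)) in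
  [/\ sorted neq L, head 0 L = a & last 0 L = a + m].
Proof.
move=> m iA iB L; rewrite /L !rev_cat -!catA; split.
- rewrite /iA /iB /m.
  do 10 (apply: sc; [piece | | piece | piece | piece]).
  apply: sc_gen; [piece | piece | move=> _ _; piece].
- by [].
- rewrite /iA /iB /m !last_cat0 ?last_rev0 //.
  all: by rewrite -size_eq0 ?size_cat ?size_rev ?size_iota.
Qed.

Section Red.
Variable n : nat.
Variable d : 'I_n.
Definition nv (l : letter n) : nat := nat_of_ord l.1.

Lemma map_nv_PQ b off m : off + m <= n -> map nv (map (nl d b) (iota off m)) = iota off m.
Proof.
move=> H; rewrite -map_comp -[RHS]map_id; apply/eq_in_map => j.
rewrite mem_iota => /andP [_ h] /=; rewrite /nv /nl /= val_insubd.
by have -> : j < n by lia.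
Qed.

Lemma map_nv_inv (u : seq (letter n)) : map nv (inv_word u) = rev (map nv u).
Proof. by rewrite /inv_word map_rev -map_comp. Qed.

Lemma map_nv_comm (u v : seq (letter n)) :
  map nv (comm u v) = map nv u ++ map nv v ++ rev (map nv u) ++ rev (map nv v).
Proof. by rewrite /comm !map_cat !map_nv_inv. Qed.

Lemma last_ne0 (s : seq nat) : last 0 s != 0 -> s != [::].
Proof. by case: s. Qed.

Lemma RC k off : off + 2 ^ k.+2 <= n ->
  [/\ sorted neq (map nv (C d k.+1 off)), head 0 (map nv (C d k.+1 off)) = off
    & last 0 (map nv (C d k.+1 off)) = off + 2 ^ k.+1].
Proof.
move=> H.
have [k' Hk] : exists k', 2 ^ k.+1 = k'.+2.
  exists (2 ^ k.+1 - 2); rewrite expnS; have := expn_gt0 2 k; lia.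
rewrite two_pow in H.
rewrite /C map_cat !map_nv_comm /X /P /Q !map_cat !map_nv_PQ; try lia.
rewrite Hk; exact: (C_nat off k').
Qed.

Lemma RED t off : off + 2 ^ t.+2 <= n ->
  [/\ sorted neq (map nv (W d t.+2 off)), head 0 (map nv (W d t.+2 off)) = off
    & last 0 (map nv (W d t.+2 off)) = off + 2 ^ t.+1].
Proof.
elim: t off => [|t IH] off H; first exact: RC.
have HM : 2 ^ t.+3 = 2 ^ t.+2 + 2 ^ t.+2 by rewrite two_pow.
have [sA hA lA] := IH off ltac:(lia).
have [sB hB lB] := IH (off + 2 ^ t.+2) ltac:(lia).
have [sC hC lC] := @RC t.+1 off H.
have p1 : 0 < 2 ^ t.+1 by rewrite expn_gt0.
have p2 : 2 ^ t.+1 < 2 ^ t.+2 by rewrite (two_pow t.+1); lia.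
rewrite [W d t.+3 off]WS (map_cat _ (W d t.+2 off)) (map_cat _ (W d t.+2 (off + 2 ^ t.+2))).
move: sA hA lA sB hB lB sC hC lC.
move: (map nv (W d t.+2 off)) (map nv (W d t.+2 (off + 2 ^ t.+2))) (map nv (C d t.+2 off)).
move=> A B Cc sA hA lA sB hB lB sC hC lC.
have nA : A != [::] by apply: last_ne0; rewrite lA; lia.
have nB : B != [::] by apply: last_ne0; rewrite lB; lia.
have nC : Cc != [::] by apply: last_ne0; rewrite lC; lia.
split.
- apply: sc_gen => //; first apply: sc_gen => //.
  + by move=> _ _; rewrite lB hC /neq; lia.
  + by move=> _ _; rewrite lA head_cat0 // hB; lia.
- by rewrite head_cat0.
- by rewrite !last_cat0 ?lC //; case: (B) nB.
Qed.

Lemma red_of_nv (w : seq (letter n)) : sorted neq (map nv w) -> freely_reduced w.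
Proof.
rewrite sorted_map => H; apply: sub_sorted H => x y /=.
rewrite /neq; apply: contra => /eqP ->.
by rewrite /nv /inv_letter.
Qed.

End Red.

Lemma count_card N (d : 'I_N) (pn : pred 'I_N) :
  count (fun j => pn (insubd d j)) (iota 0 N) = #|pn|.
Proof.
rewrite -val_enum_ord count_map.
transitivity (count pn (enum 'I_N)).
  by apply: eq_count => j /=; rewrite valKd.
rewrite cardE /enum_mem size_filter (eq_filter (a2 := predT)) // filter_predT.
by apply: eq_count => x.
Qed.

Theorem theorem4 (i : nat) (hi : 1 <= i) :
  exists w : seq (letter (2 ^ i)),
    hanging_solution (2 ^ i - 2) w /\ size w = 6 * 2 ^ i * (i - 1).
Proof.
have n0 : 0 < 2 ^ i by rewrite expn_gt0.
pose d : 'I_(2 ^ i) := Ordinal n0.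
case: i hi n0 d => [//|i] _ n0 d.
exists (W d i.+1 0); split; last by rewrite size_W subn1.
split.
  case: i n0 d => [|i] n0 d; first by [].
  apply: red_of_nv.
  by have [] := RED d (t:=i) (off:=0) (leqnn _).
move=> S.
have -> : restrict S (W d i.+1 0) = act (fw (fun j => j \notin S) (W d i.+1 0)) [::] by [].
have cS : #|~: S| = 2 ^ i.+1 - #|S|.
  by rewrite (cardsCs (~: S)) setCK card_ord.
have cnt : forall pn : pred 'I_(2 ^ i.+1),
    count (fun j => pn (insubd d j)) (iota 0 (2 ^ i.+1)) = #|pn|.
  by move=> pn; apply: count_card.
split.
- move=> H; apply/negPn/negP; rewrite -ltnNge => Hlt.
  have R3 : 2 < #|~: S| by lia.
  have [x Rx] : exists x, x \in ~: S by apply/card_gt0P; lia.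
  have [y Ry] : exists y, y \in ~: S :\ x.
    by apply/card_gt0P; move: R3; rewrite (cardsD1 x) Rx; lia.
  have [z Rz] : exists z, z \in ~: S :\ x :\ y.
    apply/card_gt0P; move: R3; rewrite (cardsD1 x) Rx (cardsD1 y (~: S :\ x)) Ry; lia.
  move: Ry Rz; rewrite !in_setD1 => /andP [yx Ry] /andP [zy /andP [zx Rz]].
  pose qn : pred 'I_(2 ^ i.+1) := fun j => j \in [:: x; y; z].
  have T := triv_fw qn H.
  have E : fw qn (fw (fun j => j \notin S) (W d i.+1 0)) = fw qn (W d i.+1 0).
    rewrite /fw -filter_predI; apply: eq_filter => l /=.
    rewrite /qn !inE.
    rewrite !in_setC in Rx Ry Rz.
    case: (l.1 =P x) => [->|_] /=; first by rewrite Rx.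
    case: (l.1 =P y) => [->|_] /=; first by rewrite Ry.
    case: (l.1 =P z) => [->|_] //=; by rewrite Rz.
  have := @NT _ d qn i 0 (leqnn _).
  rewrite cnt /qn.
  have U : uniq [:: x; y; z].
    by rewrite /= !inE negb_or eq_sym yx eq_sym zx eq_sym zy.
  rewrite (card_uniqP U) => /(_ erefl).
  by rewrite -E T.
- move=> H; apply: (PT (t := i)) => //.
  have := cnt (fun j => j \notin S); rewrite /= => ->.
  have -> : #|(fun j : 'I_(2 ^ i.+1) => j \notin S)| = #|~: S|.
    by apply: eq_card => j; rewrite in_setC.
  lia.
Qed.
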